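(* Let $p$ be a prime with $p\equiv 1\pmod 3$ and let $a$ be a positive integer. Then $$\sum_{k=1}^{\frac{2}{3}(p^a-1)}\binom{2k}{k}\equiv 0\pmod{p^2}.$$
   Context: Note that $\frac23(p^a-1)$ is a positive integer since $p^a\equiv1\pmod 3$. *)

(* Defs.v *)
From mathcomp Require Import all_boot.

(* Main.v *)
Require Import Defs.
From mathcomp Require Import all_boot.
From mathcomp Require Import all_order all_algebra.
From mathcomp Require Import ring lra zify.
Set Implicit Arguments. Unset Strict Implicit. Unset Printing Implicit Defensive.
Import Order.TTheory GRing.Theory Num.Theory.
Local Open Scope ring_scope.

Lemma coefX1n (R : nzRingType) (m i : nat) : (('X + 1 : {poly R}) ^+ m)`_i = ('C(m, i))%:R.
Proof.
elim: m i => [|m IH] i.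
  by rewrite expr0 coef1; case: i.
rewrite exprSr mulrDr mulr1 coefD coefMX.
case: i => [|i] /=; first by rewrite add0r IH !bin0.
by rewrite !IH binS natrD addrC.
Qed.

Section Fp.
Variables (p a : nat).
Hypothesis pr_p : prime p.
Local Notation F := 'F_p.
Local Notation n := (p ^ a)%N.

Lemma Fbin1 m : (0 < m < n)%N -> ('C(n, m)%:R : F) = 0.
Proof.
move=> /andP[m0 mn].
have chP : p \in [pchar {poly F}] by rewrite pchar_poly (pchar_Fp pr_p).
have nat_n : [pchar {poly F}].-nat n.
  by rewrite (eq_pnat _ (pcharf_eq chP)) pnatX pnat_id ?orbT.
have := congr1 (fun q : {poly F} => q`_m) (exprDn_pchar 'X 1 nat_n).
rewrite coefX1n expr1n coefD coefXn coef1.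
rewrite (_ : (m == n) = false); last by apply/negbTE; rewrite neq_ltn mn.
by rewrite (_ : (m == 0%N) = false) ?addr0 //; apply/negbTE; rewrite -lt0n.
Qed.

Lemma Fbin2 m : (m < n)%N -> ('C((n).-1, m)%:R : F) = (-1) ^+ m.
Proof.
elim: m => [|m IH] lt; first by rewrite bin0 expr0.
have := Fbin1 (m := m.+1); rewrite lt /= => /(_ isT).
have pa0 : (0 < n)%N by rewrite expn_gt0 prime_gt0.
rewrite -{1}(prednK pa0) binS natrD IH ?(ltnW lt) // => /eqP.
by rewrite addr_eq0 => /eqP ->; rewrite exprS mulN1r.
Qed.


Lemma Fbin3 i m : (i + m < n)%N ->
  ('C(n.-1 - i, m)%:R : F) = (-1) ^+ m * 'C(i + m, m)%:R.
Proof.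
elim: i m => [|i IHi] m.
  by rewrite subn0 add0n binn mulr1 => /Fbin2.
elim: m => [|m IHm] lt; first by rewrite !bin0 expr0 mul1r.
have e : (n.-1 - i = (n.-1 - i.+1).+1)%N.
  have pa0 : (0 < n)%N by rewrite expn_gt0 prime_gt0.
  move: lt; rewrite -(prednK pa0); lia.
have := IHi m.+1 ltac:(lia); rewrite e binS natrD IHm; last by lia.
move=> h.
have -> : ('C(n.-1 - i.+1, m.+1)%:R : F) = (-1) ^+ m.+1 * 'C(i + m.+1, m.+1)%:R - (-1) ^+ m * 'C(i.+1 + m, m)%:R.
  by rewrite -h addrK.
rewrite !addSn !addnS [in RHS]binS natrD exprS.
ring.
Qed.

Lemma Fbin4 x y : (y < n)%N -> ('C(n + x, y)%:R : F) = 'C(x, y)%:R.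
Proof.
move=> lt; rewrite -binomial.Vandermonde natr_sum big_ord_recl bin0 mul1n subn0.
rewrite big1 ?addr0 // => j _.
by rewrite natrM Fbin1 ?mul0r //= (leq_ltn_trans _ lt) // ltnS.
Qed.


Lemma sgn_odd (R : nzRingType) x : ((-1 : R) ^+ (2 * x).+1) = -1.
Proof. by rewrite exprS exprM sqrrN expr1n expr1n mulr1. Qed.

Lemma sgn_even (R : nzRingType) x : ((-1 : R) ^+ (2 * x)) = 1.
Proof. by rewrite exprM sqrrN !expr1n. Qed.

Lemma Fpt h j : n = (6 * h).+1 -> (j < 6 * h - 1)%N ->
  ((if (4 * h < j)%N then 0 else 'C((2 * h).+1, 4 * h - j)%:R) +
     (-1) ^+ j * 'C(j + 2 * h, 4 * h - 1)%:R : F) = 0.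
Proof.
move=> en lt.
have [ltj|lej] := ltnP (4 * h) j.
  rewrite add0r.
  have -> : (j + 2 * h = n + (j + 2 * h - n))%N by lia.
  rewrite Fbin4; last by lia.
  by rewrite bin_small ?mulr0 //; lia.
have [ltj2|lej2] := ltnP j (2 * h - 1).
  rewrite !bin_small ?mulr0 ?addr0 //; lia.
set m := (4 * h - j)%N.
have -> : (j + 2 * h = n.-1 - m)%N by rewrite en /m; lia.
have -> : (4 * h - 1 = (n.-1 - m) - ((2 * h).+1 - m))%N by rewrite en /m; lia.
rewrite bin_sub; last by rewrite en /m; lia.
rewrite Fbin3; last by rewrite en /m; lia.
have -> : (m + ((2 * h).+1 - m) = (2 * h).+1)%N by rewrite /m; lia.
rewrite bin_sub; last by rewrite /m; lia.
rewrite mulrA -exprD.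
have -> : (j + ((2 * h).+1 - m) = (2 * (j - h)).+1)%N by rewrite /m; lia.
by rewrite sgn_odd mulN1r subrr.
Qed.

End Fp.

Section Poly.
Variable R : comNzRingType.
Local Notation D := ('X^2 + 'X + 1 : {poly R}).

Lemma coefD3 (T : {poly R}) i :
  (D * T)`_i = T`_i + (if i is 0 then 0 else T`_i.-1) + (if (i < 2)%N then 0 else T`_(i - 2)).
Proof.
rewrite !mulrDl mul1r !coefD coefXnM coefXM.
case: i => [|[|i]] //=; rewrite ?addr0 ?add0r //.
  by rewrite addrC.
by rewrite addrC [_ + T`_i.+1]addrC addrA.
Qed.

Lemma comp_sigma_pow (q : {poly R}) m : (q ^+ m) \Po (- 'X - 1) = (q \Po (- 'X - 1)) ^+ m.
Proof. by rewrite rmorphXn. Qed.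


Lemma pal (T : {poly R}) (s : nat) : (2 <= s)%N -> (size T <= s.-1)%N ->
  (forall i, (i <= s)%N -> (D * T)`_i = (D * T)`_(s - i)) ->
  forall i, (i <= s - 2)%N -> T`_i = T`_(s - 2 - i).
Proof.
move=> s2 sz H i; elim/ltn_ind: i => i IH le.
have Tz : forall j, (s.-1 <= j)%N -> T`_j = 0 by move=> j hj; apply/(leq_sizeP _ _ sz).
have := H i ltac:(lia); rewrite !coefD3.
case: i IH le => [|[|i]] IH le.
- rewrite subn0 /=.
  have -> : (s < 2)%N = false by lia.
  case: s s2 sz H Tz {le IH} => [|s] // s2 sz H Tz /=.
  by rewrite (Tz s.+1) // (Tz s) // !addr0 !add0r subn0.
- rewrite /= addr0.
  have -> : (s - 1 < 2)%N = false by lia.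
  case E: (s - 1)%N => [|s1]; first by lia.
  rewrite /= (Tz s1.+1); last by lia.
  rewrite (IH 0%N) // subn0 add0r => e.
  have -> : T`_1 = T`_1 + T`_(s - 2) - T`_(s - 2) by rewrite addrK.
  rewrite e /= (_ : (s1 = s - 2)%N); last by lia.
  rewrite addrC addKr; congr (T`_ _); lia.
- have -> : (s - i.+2 < 2)%N = false by lia.
  case E: (s - i.+2)%N => [|s1]; first by lia.
  rewrite /= (IH i.+1) // ?(IH i) //; try lia.
  move=> e.
  have e2 : (i.+2 - 2)%N = i by lia.
  rewrite e2 (IH i) in e; try lia.
  have e3 : (s - 2 - i.+1 = s1)%N by lia.
  have e4 : (s - 2 - i = s1.+1)%N by lia.
  have e5 : (s - 2 - i.+2 = s1.+1 - 2)%N by lia.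
  rewrite e3 e4 in e; rewrite e5.
  apply: (addIr (T`_s1 + T`_s1.+1)); rewrite addrA e.
  by rewrite addrC [T`_s1.+1 + _]addrC.
Qed.


Lemma QnW h : exists W : {poly R},
  ('X + 1) ^+ (6 * h).+1 - 1 - 'X ^+ (6 * h).+1 = D * W.
Proof.
set x : {poly R} := 'X.
set n := (6 * h).+1.
set B := \sum_(i < n) (x + 1) ^+ (n.-1 - i) * (- x ^+ 2) ^+ i.
set C3 := \sum_(i < 4 * h) (x ^+ 3) ^+ ((4 * h).-1 - i) * 1 ^+ i.
set C2 := \sum_(i < 2 * h) (x ^+ 3) ^+ ((2 * h).-1 - i) * 1 ^+ i.
have hB := subrXX (x + 1) (- x ^+ 2) n.
have h3 := subrXX (x ^+ 3) 1 (4 * h).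
have h2 := subrXX (x ^+ 3) 1 (2 * h).
have eA : (x + 1) ^+ n = (x + 1 - - x ^+ 2) * B + (- x ^+ 2) ^+ n by rewrite -hB subrK.
have eN : (- x ^+ 2) ^+ n = - (x ^+ 2 * (x ^+ 3) ^+ (4 * h)).
  rewrite exprNn /n (_ : (6 * h = 2 * (3 * h))%N); last by lia.
  rewrite sgn_odd mulN1r; congr (- _).
  by rewrite -!exprM -exprD; congr (x ^+ _); lia.
have e4 : (x ^+ 3) ^+ (4 * h) = (x ^+ 3 - 1) * C3 + 1 by rewrite /C3 -h3 expr1n subrK.
have e2 : (x ^+ 3) ^+ (2 * h) = (x ^+ 3 - 1) * C2 + 1 by rewrite /C2 -h2 expr1n subrK.
have eX : x ^+ n = (x ^+ 3) ^+ (2 * h) * x.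
  by rewrite -exprM -exprSr; congr (x ^+ _); rewrite /n; lia.
exists (B - 1 - (x - 1) * (C3 * x ^+ 2 + C2 * x)).
rewrite eA eN eX e4 e2.
ring.
Qed.


Definition Gp h : {poly R} :=
  \sum_(i < (4 * h).+1) 'X ^+ ((4 * h).+1.-1 - i) * (('X + 1) ^+ 2) ^+ i.

Lemma Gp_eq h : D * Gp h = ('X + 1) ^+ (2 * (4 * h).+1) - 'X ^+ (4 * h).+1.
Proof.
rewrite /Gp.
have := subrXX ('X : {poly R}) (('X + 1) ^+ 2) (4 * h).+1.
move=> e; rewrite (_ : D = - ('X - ('X + 1) ^+ 2)); last by ring.
by rewrite mulNr -e exprM opprB.
Qed.

Definition B1 h : {poly R} := \sum_(i < (2 * h).+1) ('X + 1) ^+ ((2 * h).+1.-1 - i) * (- 'X ^+ 2) ^+ i.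
Definition B2 h : {poly R} := \sum_(i < 2 * h) ('X ^+ 3) ^+ ((2 * h).-1 - i) * 1 ^+ i.
Definition H0 h : {poly R} :=
  B1 h * (1 + 'X ^+ (6 * h).+1) - 'X ^+ (4 * h).+1 - 'X ^+ (4 * h).+3 * ('X - 1) * B2 h.

Lemma H0_eq h : D * H0 h = ('X + 1) ^+ (2 * h).+1 * (1 + 'X ^+ (6 * h).+1) - 'X ^+ (4 * h).+1.
Proof.
have hB := subrXX ('X + 1 : {poly R}) (- 'X ^+ 2) (2 * h).+1.
have h3 := subrXX ('X ^+ 3 : {poly R}) 1 (2 * h).
set x : {poly R} := 'X in hB h3 *.
have eA : (x + 1) ^+ (2 * h).+1 = (x + 1 - - x ^+ 2) * B1 h + (- x ^+ 2) ^+ (2 * h).+1.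
  by rewrite -hB subrK.
have eN : (- x ^+ 2) ^+ (2 * h).+1 = - (x ^+ (4 * h).+1 * x).
  rewrite exprNn sgn_odd mulN1r; congr (- _).
  by rewrite -exprM -exprSr; congr (x ^+ _); lia.
have e4 : (x ^+ 3) ^+ (2 * h) = (x ^+ 3 - 1) * B2 h + 1 by rewrite /B2 -h3 expr1n subrK.
have eX : x ^+ (6 * h).+1 = (x ^+ 3) ^+ (2 * h) * x.
  by rewrite -exprM -exprSr; congr (x ^+ _); lia.
have e3 : x ^+ (4 * h).+3 = x ^+ (4 * h).+1 * x ^+ 2.
  by rewrite -exprD; congr (x ^+ _); lia.
rewrite /H0 eA eN eX e4 e3 -/x.
set w := x ^+ (4 * h).+1.
ring.
Qed.


Lemma coefGp h : (Gp h)`_(4 * h) = \sum_(i < (4 * h).+1) ('C(2 * i, i))%:R.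
Proof.
rewrite /Gp coef_sum; apply: eq_bigr => i _.
rewrite coefXnM -exprM coefX1n /=.
have lei : (i <= 4 * h)%N by rewrite -ltnS.
rewrite ltnNge leq_subr /=; congr ('C(_, _))%:R; lia.
Qed.

Lemma size_X1 : size ('X + 1 : {poly R}) = 2.
Proof. by rewrite -polyC1 size_XaddC. Qed.

Lemma coefH0 h : (H0 h)`_(4 * h) = 1.
Proof.
rewrite /H0 !coefB mulrDr mulr1 coefD coefMXn.
rewrite (_ : (4 * h < (6 * h).+1)%N = true); last by apply/idP; lia.
rewrite coefXn (_ : (4 * h == (4 * h).+1)%N = false); last by apply/negbTE; lia.
rewrite -mulrA coefXnM (_ : (4 * h < (4 * h).+3)%N = true); last by apply/idP; lia.
rewrite !subr0 addr0.
rewrite /B1 coef_sum big_ord_recr /= subnn expr0 mul1r.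
rewrite exprNn -exprM sgn_even mul1r coefXn (_ : (2 * (2 * h) = 4 * h)%N); last by lia.
rewrite eqxx big1 ?add0r // => i _.
apply: nth_default.
apply: (leq_trans (size_polyMleq _ _)).
have s1 := size_poly_exp_leq ('X + 1 : {poly R}) ((2 * h).+1.-1 - i).
have s2 := size_poly_exp_leq (- 'X ^+ 2 : {poly R}) i.
rewrite size_X1 in s1; rewrite size_polyN size_polyXn in s2.
have := ltn_ord i; move: s1 s2.
set u := size _; set v := size _ => s1 s2 li.
lia.
Qed.

End Poly.


Local Notation D := ('X^2 + 'X + 1 : {poly int}).

Lemma size_D : size D = 3%N.
Proof.
rewrite -addrA size_polyDl size_polyXn //.
by rewrite -polyC1 size_XaddC.
Qed.

Lemma D_neq0 : D != 0.
Proof. by rewrite -size_poly_eq0 size_D. Qed.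

Lemma sigD_alg : (- 'X - 1 : {poly int}) ^+ 2 + (- 'X - 1) + 1 = 'X^2 + 'X + 1.
Proof. ring. Qed.

Lemma comp_sig_D : D \Po (- 'X - 1) = D.
Proof.
rewrite !comp_polyD (comp_sigma_pow 'X) comp_polyX rmorph1.
exact: sigD_alg.
Qed.


Lemma sigQ_alg m : (- 'X - 1 + 1 : {poly int}) ^+ (2 * m).+1 - 1 - (- 'X - 1) ^+ (2 * m).+1 =
   ('X + 1) ^+ (2 * m).+1 - 1 - 'X ^+ (2 * m).+1.
Proof.
have e1 : (- 'X - 1 + 1 : {poly int}) = - 'X by ring.
have e2 : (- 'X - 1 : {poly int}) = - ('X + 1) by ring.
rewrite e1 e2 (exprNn 'X) (exprNn ('X + 1)) sgn_odd !mulN1r opprK.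
generalize ('X^((2 * m).+1) : {poly int}) (('X + 1) ^+ (2 * m).+1 : {poly int}) => u v.
ring.
Qed.

Lemma comp_sig_Qn h :
  (('X + 1) ^+ (6 * h).+1 - 1 - 'X ^+ (6 * h).+1 : {poly int}) \Po (- 'X - 1) =
  ('X + 1) ^+ (6 * h).+1 - 1 - 'X ^+ (6 * h).+1.
Proof.
rewrite !comp_polyB (comp_sigma_pow ('X + 1)) (comp_sigma_pow 'X) comp_polyD comp_polyX rmorph1.
rewrite (_ : (6 * h = 2 * (3 * h))%N); last by lia.
exact: sigQ_alg.
Qed.



Lemma partA_alg (A Xn XN H Rp : {poly int}) :
  D * H = A * (1 + Xn) - XN ->
  D * (H + Rp * A) = A * (1 + Xn) - XN + A * (D * Rp).
Proof. move=> e; rewrite mulrDr e; ring. Qed.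

Lemma partA h (p : int) (R : {poly int}) :
  ('X + 1) ^+ (6 * h).+1 - 1 - 'X ^+ (6 * h).+1 = D * (p%:P * R) ->
  (\sum_(i < (4 * h).+1) ('C(2 * i, i))%:R : int) =
     1 + p * (R * ('X + 1) ^+ (2 * h).+1)`_(4 * h).
Proof.
move=> eQ.
have eG : Gp int h = H0 int h + (p%:P * R) * ('X + 1) ^+ (2 * h).+1.
  apply: (mulfI D_neq0).
  rewrite (partA_alg (p%:P * R) (H0_eq int h)) -eQ Gp_eq.
  rewrite (_ : (2 * (4 * h).+1 = (2 * h).+1 + (6 * h).+1)%N); last by lia.
  rewrite exprD.
  generalize (('X + 1 : {poly int}) ^+ (2 * h).+1) (('X + 1 : {poly int}) ^+ (6 * h).+1)
    ('X ^+ (6 * h).+1 : {poly int}) ('X ^+ (4 * h).+1 : {poly int}) => u v w z.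
  ring.
by rewrite -coefGp eG coefD coefH0 -mulrA coefCM.
Qed.

Section PartB.
Variables (h : nat) (p : int) (R : {poly int}).
Hypothesis p0 : p != 0.
Local Notation n := (6 * h).+1.
Hypothesis eQ : ('X + 1) ^+ n - 1 - 'X ^+ n = D * (p%:P * R).

Lemma sig_inv : R \Po (- 'X - 1) = R.
Proof.
have := congr1 (fun q => q \Po (- 'X - 1)) eQ; rewrite /= comp_sig_Qn eQ.
rewrite !comp_polyM comp_sig_D comp_polyC => /(mulfI D_neq0).
have pP : p%:P != 0 :> {poly int} by rewrite polyC_eq0.
by move/(mulfI pP)/esym.
Qed.

Lemma coefQn i : (('X + 1) ^+ n - 1 - 'X ^+ n : {poly int})`_i =
  ('C(n, i))%:R - (i == 0)%:R - (i == n)%:R.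
Proof. by rewrite !coefB coefX1n coef1 coefXn. Qed.

Lemma size_R : (size R <= 6 * h - 1)%N.
Proof.
have sQ : (size (('X + 1) ^+ n - 1 - 'X ^+ n : {poly int})%R <= n)%N.
  apply/leq_sizeP => j lej; rewrite coefQn.
  have [->|ne] := eqVneq j n; first by rewrite binn /= subr0 subrr.
  rewrite bin_small; last by rewrite ltn_neqAle eq_sym ne.
  rewrite (_ : (j == 0)%N = false) ?subrr //=; last by apply/negbTE; lia.
have [->|Rn0] := eqVneq R 0; first by rewrite size_poly0.
rewrite eQ size_mul ?D_neq0 ?mulf_neq0 ?polyC_eq0 // size_D size_Cmul // in sQ.
rewrite -subn1 in sQ. move: sQ. set s := size R. move=> H. lia.
Qed.


Lemma coef_sgnM (q : {poly int}) j m : (((-1) ^+ j : {poly int}) * q)`_m = (-1) ^+ j * q`_m.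
Proof. elim: j => [|j IH]; first by rewrite !expr0 !mul1r. by rewrite !exprS !mulN1r !mulNr coefN IH. Qed.

Lemma V_alg (A Y : {poly int}) : A = D * (p%:P * R) -> A * Y = p%:P * (D * (R * Y)).
Proof. move=> ->; ring. Qed.

Lemma coefV i : ((('X + 1) ^+ n - 1 - 'X ^+ n) * ('X + 1) ^+ (2 * h) : {poly int})`_i =
  ('C((8 * h).+1, i))%:R - ('C(2 * h, i))%:R - (if (i < n)%N then 0 else ('C(2 * h, i - n))%:R).
Proof.
rewrite !mulrBl mul1r -exprD coefB coefB coefX1n coefX1n coefXnM coefX1n.
by rewrite (_ : (n + 2 * h = (8 * h).+1)%N) //; lia.
Qed.

Lemma T_pal : (0 < h)%N ->
  (R * ('X + 1) ^+ (2 * h))`_(4 * h) = (R * ('X + 1) ^+ (2 * h))`_(4 * h).-1.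
Proof.
move=> h0; set T := R * _.
have eV := V_alg (('X + 1) ^+ (2 * h)) eQ.
have symV : forall i, (i <= (8 * h).+1)%N -> (D * T)`_i = (D * T)`_((8 * h).+1 - i).
  move=> i le; apply: (mulfI p0); rewrite -!coefCM -eV !coefV.
  have [le2|lt2] := leqP i (2 * h).
    rewrite (_ : (i < n)%N = true); last by apply/idP; lia.
    rewrite (_ : ((8 * h).+1 - i < n)%N = false); last by apply/negbTE; lia.
    rewrite bin_sub // (@bin_small (2 * h) ((8 * h).+1 - i)); last by lia.
    rewrite (_ : ((8 * h).+1 - i - n = 2 * h - i)%N); last by lia.
    rewrite bin_sub //; ring.
  have [ltn|len] := ltnP i n.
    rewrite (_ : ((8 * h).+1 - i < n)%N = true); last by apply/idP; lia.
    rewrite bin_sub // (@bin_small (2 * h) i) // (@bin_small (2 * h) ((8 * h).+1 - i)) //; lia.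
  rewrite (_ : ((8 * h).+1 - i < n)%N = true); last by apply/idP; lia.
  rewrite bin_sub // (@bin_small (2 * h) i); last by lia.
  rewrite (_ : ((8 * h).+1 - i = 2 * h - (i - n))%N); last by lia.
  rewrite bin_sub; last by lia.
  ring.
have szT : (size T <= (8 * h).+1.-1)%N.
  apply: (leq_trans (size_polyMleq _ _)).
  have s1 := size_poly_exp_leq ('X + 1 : {poly int}) (2 * h).
  rewrite size_X1 in s1.
  have s2 := size_R.
  move: s1 s2; set u := size _; set v := size _ => s1 s2; lia.
have := pal (s := (8 * h).+1) _ szT symV (i := 4 * h).
rewrite (_ : ((8 * h).+1 - 2 - 4 * h = (4 * h).-1)%N); last by lia.
by apply; lia.
Qed.

End PartB.



Lemma keyB (p a h : nat) (R : {poly int}) : prime p -> (p ^ a)%N = (6 * h).+1 -> (0 < h)%N ->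
  p != 3%N ->
  ('X + 1) ^+ (6 * h).+1 - 1 - 'X ^+ (6 * h).+1 = D * ((p : int)%:P * R) ->
  ((p : int) %| (R * ('X + 1) ^+ (2 * h).+1)`_(4 * h))%Z.
Proof.
move=> pr en h0 p3 eQ.
have p0 : (p : int) != 0 by rewrite (eqz_nat p 0) -lt0n prime_gt0.
set T := R * ('X + 1) ^+ (2 * h).
have ePhi : (R * ('X + 1) ^+ (2 * h).+1)`_(4 * h) = T`_(4 * h) + T`_(4 * h).-1.
  rewrite exprSr mulrA mulrDr mulr1 coefD coefMX addrC.
  by rewrite (_ : (4 * h == 0)%N = false) //; apply/negbTE; lia.
have pal := T_pal p0 eQ h0; rewrite -/T in pal.
have eE : T`_(4 * h).-1 = \sum_(j < size R) R`_j * ((-1) ^+ j * ('C(j + 2 * h, (4 * h).-1))%:R).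
  rewrite /T -{1}(sig_inv p0 eQ) comp_polyE mulr_suml coef_sum.
  apply: eq_bigr => j _.
  rewrite -scalerAl coefZ; congr (_ * _).
  rewrite (_ : - 'X - 1 = - ('X + 1 : {poly int})); last by rewrite opprD.
  by rewrite (exprNn ('X + 1)) -mulrA -exprD coef_sgnM coefX1n.
have ePhi2 : (R * ('X + 1) ^+ (2 * h).+1)`_(4 * h) =
    \sum_(j < size R) R`_j * (if (4 * h < j)%N then 0 else ('C((2 * h).+1, 4 * h - j))%:R).
  rewrite -{1}(coefK R) poly_def mulr_suml coef_sum.
  apply: eq_bigr => j _.
  by rewrite -scalerAl coefZ coefXnM coefX1n.
have szR := size_R p0 eQ.
have Fz : ((T`_(4 * h) + T`_(4 * h).-1 + T`_(4 * h).-1)%:~R : 'F_p) = 0.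
  rewrite -ePhi ePhi2 eE -big_split /= rmorph_sum big1 // => j _.
  rewrite -mulrDr rmorphM /=.
  have lj : (j < 6 * h - 1)%N by apply: (leq_trans (ltn_ord j)).
  have Fq := Fpt pr (h := h) (j := j) en lj.
  rewrite -subn1.
  rewrite rmorphD /= (fun_if (fun x : int => (x%:~R : 'F_p))) rmorph0 rmorphM rmorphXn rmorphN1 !rmorph_nat.
  by rewrite Fq mulr0.
rewrite -pal !rmorphD /= in Fz.
have n3 : (3%:R : 'F_p) != 0.
  rewrite -(dvdn_pcharf (pchar_Fp pr)) dvdn_prime2 //.
have e0 : ((T`_(4 * h))%:~R : 'F_p) = 0.
  have : (3%:R : 'F_p) * (T`_(4 * h))%:~R = 0.
    by rewrite -Fz mulr_natl mulrS mulrS mulr1n addrA.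
  by move/eqP; rewrite mulf_eq0 (negbTE n3) => /eqP.
by rewrite (dvdz_pcharf (pchar_Fp pr)) ePhi -pal rmorphD /= e0 addr0.
Qed.



Lemma W_dvd (p a h : nat) (W : {poly int}) : prime p -> (p ^ a)%N = (6 * h).+1 ->
  ('X + 1) ^+ (6 * h).+1 - 1 - 'X ^+ (6 * h).+1 = D * W ->
  forall i, ((p : int) %| W`_i)%Z.
Proof.
move=> pr en eQ i.
have chP : p \in [pchar {poly 'F_p}] by rewrite pchar_poly (pchar_Fp pr).
have nat_n : [pchar {poly 'F_p}].-nat (p ^ a)%N.
  by rewrite (eq_pnat _ (pcharf_eq chP)) pnatX pnat_id ?orbT.
have := congr1 (map_poly (@intmul 'F_p 1)) eQ.
rewrite rmorphM /= !rmorphB /= !rmorphXn /= rmorphD /= map_polyX rmorph1.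
rewrite !rmorphD /= map_polyXn map_polyX rmorph1.
rewrite -en (exprDn_pchar _ _ nat_n) expr1n.
rewrite (_ : 'X ^+ (p ^ a) + 1 - 1 - 'X ^+ (p ^ a) = 0); last by rewrite addrK subrr.
move/esym/eqP; rewrite mulf_eq0 => /orP[].
  move=> /eqP/(congr1 (fun q : {poly 'F_p} => q`_2)).
  by rewrite !coefD coefXn coefX coef1 coef0 /= !addr0 => /eqP; rewrite oner_eq0.
move/eqP/(congr1 (fun q : {poly 'F_p} => q`_i)); rewrite coef_map coef0 /= => ez.
by rewrite (dvdz_pcharf (pchar_Fp pr)) ez.
Qed.

Lemma final_thm (p a : nat) (hp : prime p) (hp3 : (p %% 3 = 1)%N) (ha : (0 < a)%N) :
  (p ^ 2 %| \sum_(1 <= k < ((2 * (p ^ a - 1)) %/ 3).+1) 'C(2 * k, k))%N.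
Proof.
have p1 : (1 < p)%N by apply: prime_gt1.
have n3 : ((p ^ a) %% 3 = 1)%N by rewrite -modnXm hp3 exp1n.
have oddp : odd p by case: (even_prime hp) hp3 => [->|].
have n2 : ((p ^ a) %% 2 = 1)%N by rewrite modn2 oddX oddp orbT.
have [h eh] : exists h, (p ^ a = (6 * h).+1)%N.
  exists ((p ^ a) %/ 6)%N; move: n3 n2; set N := (p ^ a)%N; lia.
have h0 : (0 < h)%N.
  have : (1 < p ^ a)%N by rewrite -{1}(expn0 p) ltn_exp2l.
  rewrite eh; lia.
have p3 : p != 3%N by apply/eqP => e; rewrite e in hp3.
have -> : ((2 * (p ^ a - 1)) %/ 3 = 4 * h)%N by rewrite eh; lia.
have [W eW] := QnW int h.
have hW := W_dvd hp eh eW.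
set R := \poly_(i < size W) ((W`_i) %/ (p : int))%Z.
have eWR : W = (p : int)%:P * R.
  apply/polyP => i; rewrite coefCM coef_poly.
  case: ltnP => [_|le]; first by rewrite mulrC divzK.
  by rewrite mulr0 nth_default.
rewrite eWR in eW.
have hA := partA eW.
have hB := keyB hp eh h0 p3 eW.
set Phi := (R * ('X + 1) ^+ (2 * h).+1)`_(4 * h) in hA hB.
set S := (\sum_(1 <= k < (4 * h).+1) 'C(2 * k, k))%N.
have eS : (\sum_(i < (4 * h).+1) 'C(2 * i, i) = 1 + S)%N.
  by rewrite big_ord_recl /= /S big_add1 big_mkord.
have eSZ : (S : int) = (p : int) * Phi.
  apply: (addrI 1); rewrite -hA -natr_sum eS.
  by rewrite natrD !natz.
case/dvdzP: hB => q eq.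
change (((p ^ 2)%N : int) %| (S : int))%Z.
rewrite eSZ eq; apply/dvdzP; exists q.
rewrite -[((p ^ 2)%N : int)]natz natrX natz; ring.
Qed.

Unset Implicit Arguments.
Local Close Scope ring_scope.

(* The upper limit (2/3)(p^a - 1) is written (2 * (p^a - 1)) %/ 3, which is
   exact since p^a = 1 (mod 3). *)
Theorem theorem1p2 (p a : nat) (hp : prime p) (hp3 : p %% 3 = 1) (ha : 0 < a) :
  p ^ 2 %| \sum_(1 <= k < ((2 * (p ^ a - 1)) %/ 3).+1) 'C(2 * k, k).
Proof. exact: (final_thm hp hp3 ha). Qed.
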